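(* For finite simple graphs $G$ and $H$ with disjoint vertex sets, $\mathrm{mur}(G\cup H)\le \mathrm{mur}(G)+|V(H)|+1$.
   Context: For a finite simple undirected graph $G$ on vertices $v_1,\dots,v_n$, let $A_G$ be its $(0,1)$-adjacency matrix, $D_G=\mathrm{diag}(d_1,\dots,d_n)$ with $d_i$ the degree of $v_i$, $I$ the $n\times n$ identity matrix and $J$ the $n\times n$ all-ones matrix. A universal adjacency matrix of $G$ is any matrix $\alpha A_G+\beta I+\gamma J+\delta D_G$ with real scalars $\alpha,\beta,\gamma,\delta$ and $\alpha\neq 0$. The minimum universal rank $\mathrm{mur}(G)$ is the minimum rank over all universal adjacency matrices of $G$. The union $G\cup H$ is the graph with vertex set $V(G)\cup V(H)$ and edge set $E(G)\cup E(H)$. *)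

(* Defs.v *)
From HB Require Import structures.
From mathcomp Require Import all_boot all_order all_algebra.
From mathcomp Require Import boolp reals.
Set Implicit Arguments. Unset Strict Implicit. Unset Printing Implicit Defensive.
Import Order.TTheory GRing.Theory Num.Theory.
Local Open Scope ring_scope.

Definition simple_graph (T : finType) (e : rel T) : Prop :=
  symmetric e /\ irreflexive e.

Definition adjmx (R : realType) (T : finType) (e : rel T) : 'M[R]_#|T| :=
  \matrix_(i, j) (e (enum_val i) (enum_val j))%:R.

Definition deg (T : finType) (e : rel T) (x : T) : nat := #|[set y | e x y]|.

Definition degmx (R : realType) (T : finType) (e : rel T) : 'M[R]_#|T| :=
  diag_mx (\row_i (deg e (enum_val i))%:R).

Definition univ_adj (R : realType) (T : finType) (e : rel T)
    (alpha beta gamma delta : R) : 'M[R]_#|T| :=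
  alpha *: adjmx R e + beta%:M + gamma *: const_mx 1 + delta *: degmx R e.

Definition mur_pred (R : realType) (T : finType) (e : rel T) : pred nat :=
  fun r => `[< exists alpha beta gamma delta : R,
                 alpha != 0 /\ \rank (univ_adj e alpha beta gamma delta) = r >].

Lemma mur_exists (R : realType) (T : finType) (e : rel T) :
  exists r, mur_pred R e r.
Proof.
exists (\rank (univ_adj e (1 : R) 0 0 0)); apply/asboolP.
by exists 1, 0, 0, 0; split; [exact: oner_neq0|].
Qed.

Definition mur (R : realType) (T : finType) (e : rel T) : nat :=
  ex_minn (mur_exists R e).

(* union of graphs on disjoint vertex sets: vertex type is the sum type *)
Definition union_rel (T1 T2 : finType) (e1 : rel T1) (e2 : rel T2) : rel (T1 + T2) :=
  fun x y => match x, y with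
             | inl a, inl b => e1 a b
             | inr a, inr b => e2 a b
             | _, _ => false
             end.

(* Main.v *)
Require Import Defs.
From HB Require Import structures.
From mathcomp Require Import all_boot all_order all_algebra.
From mathcomp Require Import boolp reals.

Set Implicit Arguments. Unset Strict Implicit. Unset Printing Implicit Defensive.
Import Order.TTheory GRing.Theory Num.Theory.

Section Aux.
Local Open Scope ring_scope.
Variables (R : realType) (T1 T2 : finType).

Lemma sum_sel_l (F : 'I_#|T1| -> R) (i : 'I_#|{: T1 + T2}|) :
  \sum_a (enum_val i == inl (enum_val a))%:R * F a =
  match enum_val i with inl a0 => F (enum_rank a0) | inr _ => 0 end.
Proof.
case: (enum_val i) => [a0|b0].
  rewrite (bigD1 (enum_rank a0)) //= enum_rankK eqxx mul1r big1 ?addr0 //.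
  move=> a Ha; case: eqP => [[E]|_]; last by rewrite mul0r.
  by move: Ha; rewrite E enum_valK eqxx.
by rewrite big1 // => a _; rewrite mul0r.
Qed.

Lemma sum_sel_r (F : 'I_#|T2| -> R) (i : 'I_#|{: T1 + T2}|) :
  \sum_a (enum_val i == inr (enum_val a))%:R * F a =
  match enum_val i with inr a0 => F (enum_rank a0) | inl _ => 0 end.
Proof.
case: (enum_val i) => [b0|a0].
  by rewrite big1 // => a _; rewrite mul0r.
rewrite (bigD1 (enum_rank a0)) //= enum_rankK eqxx mul1r big1 ?addr0 //.
move=> a Ha; case: eqP => [[E]|_]; last by rewrite mul0r.
by move: Ha; rewrite E enum_valK eqxx.
Qed.

Lemma deg_inl (g : rel T1) (h : rel T2) a :
  deg (union_rel g h) (inl a) = deg g a.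
Proof.
rewrite /deg -(card_imset _ (@inl_inj T1 T2)); apply: eq_card => -[y|y]; rewrite !inE /=.
  by rewrite mem_imset ?inE //; exact: inl_inj.
apply/esym/imsetP => -[z _ //].
Qed.

End Aux.

Theorem theorem16 (R : realType) (T1 T2 : finType) (g : rel T1) (h : rel T2) :
  simple_graph g -> simple_graph h ->
  (mur R (union_rel g h) <= mur R g + #|T2| + 1)%N.
Proof.
move=> _ _.
Local Open Scope ring_scope.
rewrite /mur; case: (ex_minnP (mur_exists R g)) => r /asboolP [al [be [ga [de [al0 rk]]]]] _.
case: (ex_minnP (mur_exists R (union_rel g h))) => m _ Hmin.
set MG := univ_adj g al be ga de.
set MU := univ_adj (union_rel g h) al be ga de.
have -> : (r + #|T2| + 1 = r + 1 + #|T2|)%N by rewrite addnAC.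
apply: (leq_trans (Hmin (\rank MU) _)).
  by apply/asboolP; exists al, be, ga, de.
pose n := #|{: T1 + T2}|.
pose S : 'M[R]_(#|T1|, n) := \matrix_(a, j) (enum_val j == inl (enum_val a))%:R.
pose E : 'M[R]_(#|T2|, n) := \matrix_(b, j) (enum_val j == inr (enum_val b))%:R.
pose W : 'M[R]_(#|T2|, n) := \matrix_(b, j) MU (enum_rank (inr (enum_val b))) j.
pose c : 'M[R]_(n, 1) := \matrix_(i, k) (ga * (if enum_val i is inl _ then 1 else 0)).
pose rw : 'M[R]_(1, n) := \matrix_(k, j) (if enum_val j is inr _ then 1 else 0).
have decomp : MU = S^T *m (MG *m S) + c *m rw + E^T *m W.
  apply/matrixP => i j; rewrite !mxE.
  under eq_bigr do rewrite !mxE.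
  under [X in _ = _ + _ + X]eq_bigr do rewrite !mxE.
  rewrite big_ord1 !mxE sum_sel_r.
  have HX : forall a, \sum_b MG a b * S b j =
      match enum_val j with inl b0 => MG a (enum_rank b0) | inr _ => 0 end.
    by move=> a; rewrite -(sum_sel_l (fun b => MG a b) j); apply: eq_bigr => b _; rewrite mulrC [S b j]mxE.
  under eq_bigr do rewrite HX.
  rewrite sum_sel_l.
  have eqij : forall k l : 'I_n, (k == l) = (enum_val k == enum_val l).
    by move=> k l; rewrite (inj_eq enum_val_inj).
  rewrite !eqij.
  case Ei: (enum_val i) => [a|a2]; case Ej: (enum_val j) => [b|b2];
    rewrite /MG /univ_adj ?mxE ?enum_rankK ?Ej /=.
  - by rewrite deg_inl (inj_eq enum_rank_inj) !(mulr0, addr0).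
  - by rewrite !(mulr0, mulr0n, add0r, addr0, mulr1).
  - by rewrite eqij enum_rankK Ej !(mulr0, mul0r, mulr0n, add0r, addr0).
  - by rewrite eqij enum_rankK Ej !(mulr0, mul0r, mulr0n, add0r, addr0).
rewrite decomp.
apply: (leq_trans (mxrank_add _ _)); apply: leq_add; last first.
  exact: (leq_trans (mxrankM_maxl _ _) (rank_leq_col _)).
apply: (leq_trans (mxrank_add _ _)); apply: leq_add.
  rewrite -rk; apply: (leq_trans (mxrankM_maxr _ _)); exact: mxrankM_maxl.
exact: (leq_trans (mxrankM_maxl _ _) (rank_leq_col _)).
Qed.
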